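(* Let $a$ be an unrestricted program constant. Let $A=p_A(\bar{ch},\bar y)$, $A_i=p_{A_i}(\bar{ch},\bar y)$, $C_i=p_{C_i}(\bar{ch},\bar y)$ ($i=1,2$) and $P=p_P(\bar{ch},\bar z)$ be atomic formulas, built from predicate symbols annotated with a (co)finite channel set $\bar{ch}$ and applied to vectors of variables, where $\bar y$ consists of trace variables. Let $\chi\equiv(A\wedge C_1\to A_2)\wedge(A\wedge C_2\to A_1)$. Then the formula $$[a]\{\mathit{true},\chi\}\mathit{true}\;\wedge\;[a]\{A_1\wedge A_2,\,C_1\wedge C_2\}P\;\to\;[a]\{A,\,C_1\wedge C_2\}P$$ is valid, i.e. true in every interpretation and state.
   Context: Setting (dLCHP). Variables and channels. $\mathcal V=\mathcal V_{\mathbb R}\cup\mathcal V_{\mathbb N}\cup\mathcal V_{\mathcal T}$ are real, integer and trace variables; $\Omega$ is the set of channel names. Traces and states. - A trace is a finite sequence of events $\langle ch,d,s\rangle$ with $ch\in\Omega$ and $d,s\in\mathbb R$. A recorded trace additionally tags each event with a trace variable. - $\epsilon$ is the empty trace; $\preceq$ is prefix and $\prec$ is strict prefix. - A state maps each variable to a value of its type. - $v\cdot\tau$ appends to each trace variable $h$ of state $v$ the subsequence of events of $\tau$ tagged with $h$. - $v\downarrow C$ projects the value of every trace variable onto the events with channel in $C$. Interpretations. An interpretation $I$ assigns relations to predicate symbols, and to the unrestricted program constant $a$ a prefix-closed set $[\![a]\!]^I$ of computations $(v,\tau,w)$ (state $v$, recorded trace $\tau$, final state $w$ or $\bot$) containing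 every $(v,\epsilon,\bot)$, with $v=w$ on trace variables. Prefix-closed means: if $(v,\tau,w)\in[\![a]\!]^I$ and $\tau'\preceq\tau$, then $(v,\tau',\bot)\in[\![a]\!]^I$. Formula semantics. - $I,v\models p(\bar{ch},\bar x)$ iff the values of $\bar x$ in $v\downarrow\bar{ch}$ lie in $I(p)$; propositional connectives are classical. - $I,v\models[a]\{A,C\}\psi$ iff for all $(v,\tau,w)\in[\![a]\!]^I$ both hold: - (commit) if $I,v\cdot\sigma\models A$ for all $\sigma\prec\tau$, then $I,v\cdot\tau\models C$; - (post) if $I,v\cdot\sigma\models A$ for all $\sigma\preceq\tau$ and $w\neq\bot$, then $I,w\cdot\tau\models\psi$. *)

(* Defs.v *)
From Stdlib Require Import Reals ZArith List.
Import ListNotations.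
Set Implicit Arguments.

Section DLCHP.
Variable Ch : Type.

Record event := Ev { ev_ch : Ch; ev_d : R; ev_s : R }.
Definition trace := list event.
(* recorded trace: each event tagged with a trace variable (named by nat) *)
Definition rtrace := list (event * nat).

Inductive var := VR (n : nat) | VN (n : nat) | VT (n : nat).
Definition is_trace_var (x : var) : Prop :=
  match x with VT _ => True | _ => False end.

Inductive val := valR (r : R) | valN (z : Z) | valT (t : trace).

Record state := St { sR : nat -> R; sN : nat -> Z; sT : nat -> trace }.

Definition eval_var (v : state) (x : var) : val :=
  match x with
  | VR n => valR (sR v n) | VN n => valN (sN v n) | VT n => valT (sT v n)
  end.

Definition app_tr (v : state) (tau : rtrace) : state :=
  St (sR v) (sN v)
     (fun h => sT v h ++ map fst (filter (fun e => Nat.eqb (snd e) h) tau)).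

Definition chset := Ch -> bool.
Definition proj (v : state) (C : chset) : state :=
  St (sR v) (sN v) (fun h => filter (fun e => C (ev_ch e)) (sT v h)).

Definition fin_or_cofin (C : chset) : Prop :=
  (exists l : list Ch, forall c, C c = true -> In c l) \/
  (exists l : list Ch, forall c, C c = false -> In c l).

Definition prefix (s t : rtrace) : Prop := exists r, t = s ++ r.
Definition sprefix (s t : rtrace) : Prop := prefix s t /\ s <> t.

(* formulas: predicate symbols and program constants are named by nat;
   the only programs are program constants *)
Inductive fml :=
| FTrue
| FAtom (p : nat) (C : chset) (xs : list var)
| FAnd (f g : fml)
| FImp (f g : fml)
| FBox (a : nat) (A C psi : fml).

Record interp := Interp {
  ipred : nat -> list val -> Prop;
  (* computations (v, tau, w) with w = None standing for bottom *)
  iprog : nat -> state -> rtrace -> option state -> Prop }.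

Definition wf_interp (I : interp) : Prop :=
  (forall a v, iprog I a v nil None) /\
  (forall a v tau w tau', iprog I a v tau w -> prefix tau' tau ->
      iprog I a v tau' None) /\
  (forall a v tau w, iprog I a v tau (Some w) -> forall h, sT w h = sT v h).

Fixpoint sat (I : interp) (v : state) (f : fml) {struct f} : Prop :=
  match f with
  | FTrue => True
  | FAtom p C xs => ipred I p (map (eval_var (proj v C)) xs)
  | FAnd f g => sat I v f /\ sat I v g
  | FImp f g => sat I v f -> sat I v g
  | FBox a A C psi =>
      forall tau w, iprog I a v tau w ->
        ((forall sg, sprefix sg tau -> sat I (app_tr v sg) A) ->
            sat I (app_tr v tau) C) /\
        ((forall sg, prefix sg tau -> sat I (app_tr v sg) A) ->
            forall w', w = Some w' -> sat I (app_tr w' tau) psi)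
  end.

Definition valid (f : fml) : Prop :=
  forall I, wf_interp I -> forall v, sat I v f.

End DLCHP.

(* Main.v *)
Require Import Defs.
From Stdlib Require Import Reals ZArith List Lia.

Lemma prefix_trans {Ch} {a b c : rtrace Ch} : prefix a b -> prefix b c -> prefix a c.
Proof. intros [r1 ->] [r2 ->]. exists (r1 ++ r2). now rewrite app_assoc. Qed.

Lemma prefix_refl {Ch} (a : rtrace Ch) : prefix a a.
Proof. exists nil. now rewrite app_nil_r. Qed.

Lemma sprefix_len {Ch} {a b : rtrace Ch} : sprefix a b -> length a < length b.
Proof.
  intros [[r ->] Hne]. rewrite length_app. destruct r. 
  - rewrite app_nil_r in Hne. now contradiction Hne.
  - simpl. lia.
Qed.

Lemma sprefix_trans {Ch} {a b c : rtrace Ch} : sprefix a b -> sprefix b c -> sprefix a c.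
Proof.
  intros H1 H2. split. apply (prefix_trans (proj1 H1) (proj1 H2)).
  intros ->. pose proof (sprefix_len H1). pose proof (sprefix_len H2). lia.
Qed.

Lemma gen_thm (Ch : Type) (I : interp Ch) (HI : wf_interp I) (a : nat)
  (A A1 A2 C1 C2 P : fml Ch) v :
  sat I v (FBox a (FTrue Ch) (FAnd (FImp (FAnd A C1) A2) (FImp (FAnd A C2) A1)) (FTrue Ch)) ->
  sat I v (FBox a (FAnd A1 A2) (FAnd C1 C2) P) ->
  sat I v (FBox a A (FAnd C1 C2) P).
Proof.
  destruct HI as [H0 [Hpc _]].
  simpl. intros Hb1 Hb2 tau w Htw.
  assert (Hchi : forall s, prefix s tau ->
     (sat I (app_tr v s) A /\ sat I (app_tr v s) C1 -> sat I (app_tr v s) A2) /\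
     (sat I (app_tr v s) A /\ sat I (app_tr v s) C2 -> sat I (app_tr v s) A1)).
  { intros s Hs. refine (proj1 (Hb1 s None (Hpc _ _ _ _ _ Htw Hs)) _). intros; exact Logic.I. }
  assert (Hcl : forall n s, length s <= n -> prefix s tau ->
            (forall r, sprefix r s -> sat I (app_tr v r) A) ->
            sat I (app_tr v s) C1 /\ sat I (app_tr v s) C2).
  { induction n as [|n IH]; intros s Hl Hs HA;
    apply (proj1 (Hb2 s None (Hpc _ _ _ _ _ Htw Hs)));
    intros r Hr; pose proof (sprefix_len Hr) as Hlen.
    - lia.
    - assert (HrT : prefix r tau) by exact (prefix_trans (proj1 Hr) Hs).
      assert (HC : sat I (app_tr v r) C1 /\ sat I (app_tr v r) C2).
      { apply (IH r). lia. exact HrT. intros q Hq. apply HA. exact (sprefix_trans Hq Hr). }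
      destruct (Hchi r HrT) as [X1 X2]. pose proof (HA r Hr).
      split; [apply X2 | apply X1]; tauto. }
  split.
  - intros HA. apply (Hcl (length tau) tau (le_n _) (prefix_refl _) HA).
  - intros HA. apply (proj2 (Hb2 tau w Htw)).
    intros s Hs. 
    assert (HC : sat I (app_tr v s) C1 /\ sat I (app_tr v s) C2).
    { apply (Hcl (length s) s (le_n _) Hs). intros r Hr. apply HA.
      exact (prefix_trans (proj1 Hr) Hs). }
    destruct (Hchi s Hs) as [X1 X2]. pose proof (HA s Hs).
    split; [apply X2 | apply X1]; tauto.
Qed.

Theorem theorem3 (Ch : Type) (a : nat)
  (pA pA1 pA2 pC1 pC2 pP : nat)
  (chA chA1 chA2 chC1 chC2 chP : chset Ch)
  (yA yA1 yA2 yC1 yC2 zP : list (var))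
  (hchA : fin_or_cofin chA) (hchA1 : fin_or_cofin chA1)
  (hchA2 : fin_or_cofin chA2) (hchC1 : fin_or_cofin chC1)
  (hchC2 : fin_or_cofin chC2) (hchP : fin_or_cofin chP)
  (hyA : Forall is_trace_var yA) (hyA1 : Forall is_trace_var yA1)
  (hyA2 : Forall is_trace_var yA2) (hyC1 : Forall is_trace_var yC1)
  (hyC2 : Forall is_trace_var yC2) :
  let A := FAtom pA chA yA in
  let A1 := FAtom pA1 chA1 yA1 in
  let A2 := FAtom pA2 chA2 yA2 in
  let C1 := FAtom pC1 chC1 yC1 in
  let C2 := FAtom pC2 chC2 yC2 in
  let P := FAtom pP chP zP in
  let chi := FAnd (FImp (FAnd A C1) A2) (FImp (FAnd A C2) A1) in
  valid (FImp (FAnd (FBox a (FTrue Ch) chi (FTrue Ch))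
                    (FBox a (FAnd A1 A2) (FAnd C1 C2) P))
              (FBox a A (FAnd C1 C2) P)).
Proof.
  intros A A1 A2 C1 C2 P chi I HI v [H1 H2].
  exact (@gen_thm Ch I HI a A A1 A2 C1 C2 P v H1 H2).
Qed.
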